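(* Let $G$ be a $2K_2$-free graph, let $a,b$ be adjacent vertices of $G$, and let $X$ be a minimal dominating set of $G$ with $a,b\in X$ and $|X|>\alpha(G)$. Let $A$ be the set of vertices not in $\{a,b\}$ adjacent to neither $a$ nor $b$, let $N$ be the set of vertices not in $\{a,b\}$ adjacent to at least one of $a,b$, let $Y=X\cap N$, and let $Z$ be the set of vertices of $A$ having at least one neighbour in $Y$. Suppose $|Y|>1$. If $a^*\notin X$ is a private neighbour of $a$ and $b^*\notin X$ is a private neighbour of $b$ (with respect to $X$), then neither $a^*$ nor $b^*$ has a neighbour in $Z$.
   Context: All graphs are finite, simple and undirected. $2K_2$-free means no induced subgraph isomorphic to the disjoint union of two edges. $\alpha(G)$ is the maximum size of an independent set of $G$. A dominating set is a vertex set $D$ such that every vertex outside $D$ has a neighbour in $D$; it is minimal if no proper subset is dominating. Given a dominating set $D$ and $x\in D$, a vertex $y\notin D$ is a private neighbour of $x$ if $x$ is the only neighbour of $y$ in $D$. *)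

(* Defs.v *)
From mathcomp Require Import all_boot.
Set Implicit Arguments. Unset Strict Implicit. Unset Printing Implicit Defensive.

Definition simple_graph (T : finType) (e : rel T) : Prop :=
  symmetric e /\ irreflexive e.

Definition twoK2_free (T : finType) (e : rel T) : Prop :=
  forall x1 y1 x2 y2 : T,
    e x1 y1 -> e x2 y2 -> uniq [:: x1; y1; x2; y2] ->
    [|| e x1 x2, e x1 y2, e y1 x2 | e y1 y2].

Definition independent (T : finType) (e : rel T) (S : {set T}) : bool :=
  [forall x in S, forall y in S, ~~ e x y].

Definition alpha (T : finType) (e : rel T) : nat :=
  \max_(S : {set T} | independent e S) #|S|.

Definition dominating (T : finType) (e : rel T) (D : {set T}) : bool :=
  [forall y, (y \notin D) ==> [exists x in D, e x y]].

Definition minimal_dominating (T : finType) (e : rel T) (D : {set T}) : bool :=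
  dominating e D && [forall D' : {set T}, (D' \proper D) ==> ~~ dominating e D'].

Definition private_nb (T : finType) (e : rel T) (D : {set T}) (x y : T) : bool :=
  (y \notin D) && e x y && [forall z in D, e z y ==> (z == x)].

(* Main.v *)
Require Import Defs.
From mathcomp Require Import all_boot.
Set Implicit Arguments. Unset Strict Implicit. Unset Printing Implicit Defensive.

Lemma tk2 (T : finType) (e : rel T) x1 y1 x2 y2 : twoK2_free e ->
  e x1 y1 -> e x2 y2 -> x1 != y1 -> x1 != x2 -> x1 != y2 -> y1 != x2 ->
  y1 != y2 -> x2 != y2 ->
  ~~ e x1 x2 -> ~~ e x1 y2 -> ~~ e y1 x2 -> ~~ e y1 y2 -> False.
Proof.
move=> K e1 e2 n1 n2 n3 n4 n5 n6 m1 m2 m3 m4.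
have U : uniq [:: x1; y1; x2; y2].
  by rewrite /= !inE !negb_or n1 n2 n3 n4 n5 n6.
have := K _ _ _ _ e1 e2 U.
by rewrite (negbTE m1) (negbTE m2) (negbTE m3) (negbTE m4).
Qed.

Lemma privE (T : finType) (e : rel T) X x v : private_nb e X x v ->
  [/\ v \notin X, e x v & forall w, w \in X -> e w v -> w = x].
Proof.
case/andP=> /andP[vX exv] /forallP H; split=> // w wX ewv.
by have := H w; rewrite wX ewv /= => /eqP.
Qed.

Lemma privN (T : finType) (e : rel T) X x v w : private_nb e X x v ->
  w \in X -> w != x -> ~~ e w v.
Proof.
case/privE=> _ _ H wX wx; apply/negP=> ewv.
by rewrite (H w wX ewv) eqxx in wx.
Qed.

Definition inA (T : finType) (e : rel T) a b v :=
  (v != a) && (v != b) && ~~ e a v && ~~ e b v.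

Lemma A_indep (T : finType) (e : rel T) a b u v :
  irreflexive e -> twoK2_free e -> e a b -> inA e a b u -> inA e a b v -> ~~ e u v.
Proof.
move=> irr K eab /andP[/andP[/andP[ua ub] nau] nbu] /andP[/andP[/andP[va vb] nav] nbv].
apply/negP=> euv.
have neq : forall x y, e x y -> x != y.
  by move=> x y exy; apply/eqP=> E; subst; rewrite irr in exy.
apply: (tk2 K eab euv) => //; try exact: neq; by rewrite eq_sym.
Qed.

Lemma priv_exists (T : finType) (e : rel T) a b X x :
  minimal_dominating e X -> a \in X -> b \in X -> x \in X -> x != a -> x != b ->
  e a x || e b x -> exists v, private_nb e X x v && inA e a b v.
Proof.
case/andP=> domX /forallP minX aX bX xX xa xb eabx.
have := minX (X :\ x); rewrite properD1 //= => /forallPn [v].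
rewrite negb_imply in_setD1 negb_and negbK => /andP[vXx /existsPn nv].
have nv' : forall w, w \in X -> w != x -> ~~ e w v.
  by move=> w wX wx; have := nv w; rewrite in_setD1 wx wX.
case: (eqVneq v x) => [E|vx].
  subst v; case/orP: eabx => H.
  - by have := nv' a aX; rewrite eq_sym xa H => /(_ isT).
  - by have := nv' b bX; rewrite eq_sym xb H => /(_ isT).
have vX : v \notin X by move: vXx; rewrite (negbTE vx).
have := (forallP domX) v; rewrite vX /= => /existsP [w /andP[wX ewv]].
have wx : w = x.
  by apply/eqP; apply: contraLR ewv => wx; apply: nv'.
subst w.
exists v; apply/andP; split.
  rewrite /private_nb vX ewv /=; apply/forallP=> u; apply/implyP=> uX.
  by apply/implyP=> euv; apply: contraLR euv => ux; apply: nv'.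
rewrite /inA -andbA -andbA; apply/and4P; split.
- by apply: contraNneq vX => ->.
- by apply: contraNneq vX => ->.
- by apply: nv' => //; rewrite eq_sym.
- by apply: nv' => //; rewrite eq_sym.
Qed.

Lemma z_priv (T : finType) (e : rel T) a b X z :
  symmetric e -> irreflexive e -> twoK2_free e -> e a b ->
  minimal_dominating e X -> a \in X -> b \in X -> alpha e < #|X| ->
  inA e a b z -> z \notin X -> exists2 y0, y0 \in X & private_nb e X y0 z.
Proof.
move=> sym irr K eab md aX bX al iz zX.
case: (boolP [exists y0 in X, private_nb e X y0 z]) => [/existsP [y0 /andP[? ?]]|/existsPn H].
  by exists y0.
exfalso.
have ab : a != b by apply/eqP=> E; subst; rewrite irr in eab.
have za : z != a by move: iz; rewrite /inA => /andP[/andP[/andP[]]].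
pose h x := if x == a then a else if x == b then z else if inA e a b x then x
            else odflt x [pick v | private_nb e X x v && inA e a b v].
pose rec v := if v == a then a else if v \in X then v else if v == z then b
            else odflt v [pick w | (w \in X) && e w v].
have hY : forall x, x \in X -> x != a -> x != b -> ~~ inA e a b x ->
    private_nb e X x (h x) && inA e a b (h x).
  move=> x xX xa xb nx; rewrite /h (negbTE xa) (negbTE xb) (negbTE nx).
  case: pickP => [v //|none]; exfalso.
  have exab : e a x || e b x.
    by move: nx; rewrite /inA xa xb /= negb_and !negbK orbC.
  have [v Hv] := priv_exists md aX bX xX xa xb exab.
  by rewrite none in Hv.
have hrec : forall x, x \in X -> rec (h x) = x.
  move=> x xX; case: (eqVneq x a) => [->|xa]; first by rewrite /h eqxx /rec eqxx.
  case: (eqVneq x b) => [->|xb].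
    by rewrite /h eq_sym (negbTE ab) eqxx /rec (negbTE za) (negbTE zX) eqxx.
  case: (boolP (inA e a b x)) => ix.
    by rewrite /h (negbTE xa) (negbTE xb) ix /rec (negbTE xa) xX.
  have /andP[pv iv] := hY x xX xa xb ix.
  have [hX exh hu] := privE pv.
  have hxa : h x != a by move: iv; rewrite /inA => /andP[/andP[/andP[]]].
  have hz : h x != z.
    by apply/eqP=> E; have := H x; rewrite xX -E pv.
  rewrite /rec (negbTE hxa) (negbTE hX) (negbTE hz).
  case: pickP => [w /andP[wX ew]|none]; first by rewrite /= (hu w wX ew).
  by have := none x; rewrite xX exh.
have inj : {in X &, injective h}.
  by move=> x1 x2 H1 H2 E; rewrite -(hrec x1) // E hrec.
pose I := [set v | (v == a) || inA e a b v].
have sub : h @: X \subset I.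
  apply/subsetP => v /imsetP [x xX ->]; rewrite inE.
  case: (eqVneq x a) => [->|xa]; first by rewrite /h eqxx eqxx.
  case: (eqVneq x b) => [->|xb]; first by rewrite /h (eq_sym b a) (negbTE ab) eqxx iz orbT.
  case: (boolP (inA e a b x)) => ix.
    by rewrite /h (negbTE xa) (negbTE xb) ix; apply/orP; right.
  by have /andP[_ ->] := hY x xX xa xb ix; rewrite orbT.
have indI : independent e I.
  apply/forallP=> u; apply/implyP; rewrite inE => Hu.
  apply/forallP=> v; apply/implyP; rewrite inE => Hv.
  case/orP: Hu => [/eqP ->|iu]; case/orP: Hv => [/eqP ->|iv].
  - by rewrite irr.
  - by move: iv; rewrite /inA => /andP[/andP[_ ->]].
  - by rewrite sym; move: iu; rewrite /inA => /andP[/andP[_ ->]].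
  - exact: A_indep irr K eab iu iv.
have : #|X| <= alpha e.
  rewrite -(card_in_imset inj); apply: leq_trans (subset_leq_card sub) _.
  by rewrite /alpha; apply: (leq_bigmax_cond (P := fun S : {set T} => independent e S)) indI.
by rewrite leqNgt al.
Qed.

Ltac dq H := first [ done | (rewrite eq_sym; done) | (apply: H; done) | (rewrite eq_sym; apply: H; done) ].

Lemma key (T : finType) (e : rel T) a b X as' bs z y1 y2 :
  symmetric e -> irreflexive e -> twoK2_free e -> e a b ->
  minimal_dominating e X -> a \in X -> b \in X -> alpha e < #|X| ->
  y1 != y2 -> y1 \in X -> y2 \in X -> y1 != a -> y1 != b -> y2 != a -> y2 != b ->
  e a y1 || e b y1 -> e a y2 || e b y2 ->
  private_nb e X a as' -> private_nb e X b bs -> inA e a b z -> ~~ e as' z.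
Proof.
move=> sym irr K eab md aX bX al y12 y1X y2X y1a y1b y2a y2b N1 N2 pa pb iz.
apply/negP=> ez.
have ab : a != b by apply/eqP=> E; subst; rewrite irr in eab.
have ba : b != a by rewrite eq_sym.
have [asX eaas pas] := privE pa.
have [bsX ebbs pbs] := privE pb.
have iz' := iz.
move: iz' => /andP[/andP[/andP[za zb] nza] nzb].
have nX : forall u v, u \in X -> v \notin X -> u != v.
  by move=> u v uX vX; apply/eqP=> E; subst; rewrite uX in vX.
have adjN : forall x u v, e x u -> ~~ e x v -> u != v.
  by move=> x u v H1 H2; apply/eqP=> E; subst; rewrite H1 in H2.
have zX : z \notin X.
  by apply/negP=> zX; have := pas z zX; rewrite sym ez => /(_ isT) E; rewrite E eqxx in za.
have [y0 y0X pz] := z_priv sym irr K eab md aX bX al iz zX.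
have [_ ey0z pzu] := privE pz.
have y0a : y0 != a by apply/eqP=> E; subst; rewrite ey0z in nza.
have y0b : y0 != b by apply/eqP=> E; subst; rewrite ey0z in nzb.
have asz : as' != z by apply: adjN eaas nza.
have bsz : bs != z by apply: adjN ebbs nzb.
have main : forall yy, yy \in X -> yy != a -> yy != b -> e a yy || e b yy ->
    yy != y0 -> False.
  move=> yy yyX yya yyb N yy0.
  have yyz : ~~ e yy z by apply/negP=> E; rewrite (pzu yy yyX E) eqxx in yy0.
  have nbyy : ~~ e b yy.
    apply/negP=> eb.
    apply: (tk2 K eb ez); try dq nX.
    - exact: privN pa bX ba.
    - exact: privN pa yyX yya.
  have eayy : e a yy by move: N; rewrite (negbTE nbyy) orbF.
  have [v /andP[pv iv]] := priv_exists md aX bX yyX yya yyb N.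
  have [vX eyv pvu] := privE pv.
  have iv' := iv.
  move: iv' => /andP[/andP[/andP[va vb] nav] nbv].
  have vz : v != z by apply: adjN eyv yyz.
  have asv : as' != v by apply: adjN eaas nav.
  have easv : e as' v.
    case: (boolP (e as' v)) => // n; exfalso.
    apply: (tk2 K ez eyv); try dq nX.
    - by rewrite sym; exact: privN pa yyX yya.
    - by rewrite sym.
    - exact: A_indep irr K eab iz iv.
  case: (boolP (e b y0)) => eby0.
    apply: (tk2 K eby0 easv); try dq nX.
    - exact: privN pa bX ba.
    - exact: privN pa y0X y0a.
    - by apply: (privN pv y0X); rewrite eq_sym.
  have ezbs : e z bs.
    case: (boolP (e z bs)) => // n; exfalso.
    apply: (tk2 K ey0z ebbs); try dq nX.
    - by rewrite sym.
    - exact: privN pb y0X y0b.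
    - by rewrite sym.
  have ebsz : e bs z by rewrite sym.
  apply: (tk2 K eayy ebsz); try dq nX.
  - exact: privN pb aX ab.
  - exact: privN pb yyX yyb.
case: (eqVneq y1 y0) => [E|y10]; last exact: main y1 y1X y1a y1b N1 y10.
subst y0; apply: (main y2 y2X y2a y2b N2); by rewrite eq_sym.
Qed.

Theorem claim5 (T : finType) (e : rel T) (a b : T) (X : {set T}) (astar bstar : T) :
  simple_graph e -> twoK2_free e -> e a b ->
  minimal_dominating e X -> a \in X -> b \in X -> alpha e < #|X| ->
  let A := [set v | (v != a) && (v != b) && ~~ e a v && ~~ e b v] in
  let N := [set v | (v != a) && (v != b) && (e a v || e b v)] in
  let Y := X :&: N in
  let Z := [set v in A | [exists y in Y, e v y]] in
  1 < #|Y| ->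
  astar \notin X -> private_nb e X a astar ->
  bstar \notin X -> private_nb e X b bstar ->
  forall z, z \in Z -> ~~ e astar z /\ ~~ e bstar z.
Proof.
move=> [sym irr] K eab md aX bX al A N Y Z Y1 asX pa bsX pb z zZ.
move/card_gt1P: Y1 => [y1 [y2 [H1 H2 y12]]].
move: H1; rewrite /Y /N !inE => /andP[y1X /andP[/andP[y1a y1b] N1]].
move: H2; rewrite /Y /N !inE => /andP[y2X /andP[/andP[y2a y2b] N2]].
move: zZ; rewrite /Z /A !inE => /andP[iz _].
have iz' : inA e b a z.
  by move: iz => /andP[/andP[/andP[h1 h2] h3] h4]; rewrite /inA h1 h2 h3 h4.
split.
- exact: (key sym irr K eab md aX bX al y12 y1X y2X y1a y1b y2a y2b N1 N2 pa pb iz).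
- have eba : e b a by rewrite sym.
  rewrite orbC in N1; rewrite orbC in N2.
  exact: (key sym irr K eba md bX aX al y12 y1X y2X y1b y1a y2b y2a N1 N2 pb pa iz').
Qed.
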